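(* For all integers $n\ge1$ and $r\ge0$, and all $X>0$, $$P^{n}\big[X^{n}\check q_r(\alpha)\big](X)=\frac{(-1)^{n}}{\binom{r+n}{n}}\,(P-1)\Big(P-\tfrac12\Big)\cdots\Big(P-\tfrac1n\Big)\big[\check q_{r+n}(\alpha)\big](X).$$
   Context: For $X>0$, $\alpha=X-\lfloor X\rfloor$. $P[f](X)=\frac1X\int_0^X f(x)\,dx$, $1$ denotes the identity operator, and polynomials in $P$ act by composition. The polynomials $q_n$ are defined by $q_1(\alpha)=\alpha-\tfrac12$ and $q_{n+1}'=q_n$, $\int_0^1 q_{n+1}=0$; $\check q_j(\alpha):=j!\,q_{j+1}(\alpha)$, regarded as period-1 functions of $X$. *)

(* Defs.v *)
From Stdlib Require Import Reals.
From Coquelicot Require Import Coquelicot.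
Open Scope R_scope.

Definition alpha (X : R) : R := frac_part X.

(* The polynomials q_n: q_0 = 1 (unused), q_1(a) = a - 1/2,
   q_{n+1} = the antiderivative of q_n with zero mean on [0,1]:
   q_{n+1}(a) = int_0^a q_n - int_0^1 (int_0^t q_n) dt. *)
Fixpoint q (n : nat) : R -> R :=
  match n with
  | O => fun _ => 1
  | S O => fun a => a - / 2
  | S m => fun a =>
      RInt (q m) 0 a - RInt (fun t => RInt (q m) 0 t) 0 1
  end.

(* \check q_j (alpha) = j! q_{j+1}(alpha), as a function of X (period 1). *)
Definition qcheck (j : nat) (X : R) : R := INR (Factorial.fact j) * q (S j) (alpha X).

Definition P (f : R -> R) : R -> R := fun X => / X * RInt f 0 X.

Fixpoint Pprod (n : nat) (f : R -> R) : R -> R :=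
  match n with
  | O => f
  | S k => fun X => P (Pprod k f) X - / INR (S k) * Pprod k f X
  end.

(* Main.v *)
Require Import Defs.
From Stdlib Require Import Reals Lra Lia.
From Coquelicot Require Import Coquelicot.
Open Scope R_scope.
Lemma cont_ex_RInt (g : R -> R) a b : (forall x, continuous g x) -> ex_RInt g a b.
Proof. intros H; apply (ex_RInt_continuous (V:=R_CompleteNormedModule)); intros; apply H. Qed.
Lemma cont_cpt (g : R -> R) x : continuous g x -> continuity_pt g x.
Proof. intros; apply continuity_pt_filterlim; auto. Qed.
Lemma deriv_RInt_cont (g : R -> R) : (forall x, continuous g x) ->
  forall x, is_derive (fun y => RInt g 0 y) x (g x).
Proof.
  intros H x. apply is_derive_RInt with (a := 0).
  - apply filter_forall. intros y. apply (RInt_correct (V:=R_CompleteNormedModule)), cont_ex_RInt, H.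
  - apply H.
Qed.
Lemma q_SS m : q (S (S m)) = fun a => RInt (q (S m)) 0 a - RInt (fun t => RInt (q (S m)) 0 t) 0 1.
Proof. reflexivity. Qed.
Lemma q_cont_deriv m : (forall x, continuous (q (S m)) x) ->
  forall x, is_derive (q (S (S m))) x (q (S m) x).
Proof.
  intros H x. rewrite q_SS. generalize H; generalize (q (S m)); intros Q HQ.
  auto_derive.
  - split; [apply cont_ex_RInt, HQ|split; [|exact I]].
    apply filter_forall; intros; apply cont_cpt, HQ.
  - ring.
Qed.
Lemma q_cont m : forall x, continuous (q m) x.
Proof.
  induction m as [|m IH]; intros x.
  - simpl. apply continuous_const.
  - destruct m as [|m].
    + simpl. apply continuity_pt_filterlim. apply continuity_pt_minus.
      apply continuity_pt_id. apply continuity_pt_const. intros a b; reflexivity.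
    + apply (ex_derive_continuous (K:=R_AbsRing) (V:=R_NormedModule)). eexists. apply q_cont_deriv, IH.
Qed.
Lemma q_deriv m x : is_derive (q (S (S m))) x (q (S m) x).
Proof. apply q_cont_deriv, q_cont. Qed.
Lemma q_int0 m : RInt (q (S m)) 0 1 = 0.
Proof.
  destruct m as [|m].
  - simpl. apply is_RInt_unique.
    assert (Hd : is_RInt (fun a => a - /2) 0 1 (minus ((fun a => a*a/2 - a/2) 1) ((fun a => a*a/2 - a/2) 0))).
    2:{ revert Hd. unfold minus, plus, opp; simpl. replace (1 * 1 / 2 - 1 / 2 + - (0 * 0 / 2 - 0 / 2)) with 0 by field. auto. }
    apply (is_RInt_derive (V:=R_CompleteNormedModule) (fun a => a*a/2 - a/2)).
    + intros y _. auto_derive; auto. field.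
    + intros y _. apply continuity_pt_filterlim. apply continuity_pt_minus.
      apply continuity_pt_id. apply continuity_pt_const. intros a b; reflexivity.
  - pose proof (q_cont (S m)) as HQ. rewrite q_SS. revert HQ. generalize (q (S m)); intros Q HQ.
    assert (HI : forall x, continuous (fun y => RInt Q 0 y) x).
    { intros y. apply (ex_derive_continuous (K:=R_AbsRing) (V:=R_NormedModule)).
      eexists. apply (deriv_RInt_cont Q HQ). }
    rewrite (RInt_minus (V:=R_CompleteNormedModule) (fun a => RInt Q 0 a)).
    + rewrite RInt_const. unfold minus, plus, opp, scal; simpl.
      unfold mult; simpl. ring.
    + apply cont_ex_RInt, HI.
    + apply ex_RInt_const.
Qed.
Lemma cpt_cont (g : R -> R) x : continuity_pt g x -> continuous g x.
Proof. intros; apply continuity_pt_filterlim; auto. Qed.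

Lemma cont_lin (f g : R -> R) a b x : continuous f x -> continuous g x ->
  continuous (fun y => a * f y + b * g y) x.
Proof.
  intros Hf Hg. apply cpt_cont. apply cont_cpt in Hf. apply cont_cpt in Hg.
  apply (continuity_pt_plus (fun y => a * f y) (fun y => b * g y)).
  apply (continuity_pt_scal f a x Hf). apply (continuity_pt_scal g b x Hg).
Qed.
Lemma cont_mul (f g : R -> R) x : continuous f x -> continuous g x ->
  continuous (fun y => f y * g y) x.
Proof.
  intros Hf Hg. apply cpt_cont. apply cont_cpt in Hf. apply cont_cpt in Hg.
  apply (continuity_pt_mult f g x Hf Hg).
Qed.
Lemma cont_pow n x : continuous (fun y => y ^ n) x.
Proof. apply (ex_derive_continuous (K:=R_AbsRing) (V:=R_NormedModule)). auto_derive; auto. Qed.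

Lemma cpt_ed (u : R -> R) z : continuous u z ->
  forall eps, 0 < eps -> exists d, 0 < d /\ forall w, Rabs (w - z) < d -> Rabs (u w - u z) < eps.
Proof.
  intros H eps He. apply continuity_pt_filterlim in H.
  unfold continuity_pt, continue_in, limit1_in, limit_in in H; simpl in H.
  destruct (H eps He) as [d [Hd Hw]]. exists d; split; auto.
  intros w Hwz. destruct (Req_dec w z) as [->|Hne].
  - unfold Rminus; rewrite Rplus_opp_r, Rabs_R0; auto.
  - apply Hw. split. split; [exact I|auto]. unfold Rdist; auto.
Qed.

Lemma ed_cont (u : R -> R) z :
  (forall eps, 0 < eps -> exists d, 0 < d /\ forall w, Rabs (w - z) < d -> Rabs (u w - u z) < eps) ->
  continuous u z.
Proof.
  intros H. apply continuity_pt_filterlim.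
  unfold continuity_pt, continue_in, limit1_in, limit_in; simpl.
  intros eps He. destruct (H eps He) as [d [Hd Hw]]. exists d; split; auto.
  intros w [_ Hw']. apply Hw. exact Hw'.
Qed.

Lemma Int_part_eq k y : IZR k <= y < IZR k + 1 -> Int_part y = k.
Proof.
  intros [H1 H2]. destruct (base_Int_part y) as [B1 B2].
  assert (IZR (Int_part y) < IZR (k+1)) by (rewrite plus_IZR; simpl; lra).
  assert (IZR (k - 1) < IZR (Int_part y)) by (rewrite minus_IZR; simpl; lra).
  apply lt_IZR in H. apply lt_IZR in H0. lia.
Qed.

Lemma alpha_eq k y : IZR k <= y < IZR k + 1 -> alpha y = y - IZR k.
Proof. intros H. unfold alpha, frac_part. rewrite (Int_part_eq k y H). reflexivity. Qed.

Lemma cont_alpha (u : R -> R) : (forall x, continuous u x) -> u 0 = u 1 ->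
  forall x, continuous (fun y => u (alpha y)) x.
Proof.
  intros Hu Hp x. apply ed_cont. intros eps He.
  set (k := Int_part x). destruct (base_Int_part x) as [B1 B2]. fold k in B1, B2.
  assert (Hx : IZR k <= x < IZR k + 1) by lra.
  destruct (Req_dec x (IZR k)) as [Heq|Hne].
  - destruct (cpt_ed u 0 (Hu 0) eps He) as [d0 [Hd0 H0]].
    destruct (cpt_ed u 1 (Hu 1) eps He) as [d1 [Hd1 H1]].
    exists (Rmin 1 (Rmin d0 d1)). split.
    { apply Rmin_pos; [lra|apply Rmin_pos; auto]. }
    intros w Hw. rewrite (alpha_eq k x Hx), Heq, Rminus_diag.
    assert (Hm1 := Rmin_l 1 (Rmin d0 d1)). assert (Hm2 := Rmin_r 1 (Rmin d0 d1)).
    assert (Hm3 := Rmin_l d0 d1). assert (Hm4 := Rmin_r d0 d1).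
    rewrite Heq in Hw. apply Rabs_def2 in Hw. destruct Hw as [Hw1 Hw2].
    destruct (Rle_lt_dec (IZR k) w) as [Hkw|Hkw].
    + rewrite (alpha_eq k w) by lra. apply H0. rewrite Rminus_0_r. apply Rabs_def1; lra.
    + rewrite (alpha_eq (k-1) w) by (rewrite minus_IZR; simpl; lra).
      rewrite Hp. rewrite minus_IZR. simpl. apply H1. apply Rabs_def1; lra.
  - assert (Hz : IZR k < x) by lra.
    destruct (cpt_ed u (x - IZR k) (Hu _) eps He) as [d [Hd H0]].
    exists (Rmin d (Rmin (x - IZR k) (IZR k + 1 - x))). split.
    { apply Rmin_pos; [lra|apply Rmin_pos; lra]. }
    intros w Hw.
    assert (Hm1 := Rmin_l d (Rmin (x - IZR k) (IZR k + 1 - x))). assert (Hm2 := Rmin_r d (Rmin (x - IZR k) (IZR k + 1 - x))).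
    assert (Hm3 := Rmin_l (x - IZR k) (IZR k + 1 - x)). assert (Hm4 := Rmin_r (x - IZR k) (IZR k + 1 - x)).
    apply Rabs_def2 in Hw. destruct Hw as [Hw1 Hw2].
    rewrite (alpha_eq k x Hx), (alpha_eq k w) by lra. apply H0. apply Rabs_def1; lra.
Qed.

Definition good (f : R -> R) := exists g, (forall x, continuous g x) /\ (forall x, 0 < x -> f x = g x).

Lemma good_ext f g : good f -> (forall x, 0 < x -> f x = g x) -> good g.
Proof. intros [h [H1 H2]] E. exists h; split; auto. intros x Hx; rewrite <- E; auto. Qed.

Lemma good_cont f : (forall x, continuous f x) -> good f.
Proof. intros H; exists f; auto. Qed.

Lemma good_ex_RInt f X : good f -> 0 <= X -> ex_RInt f 0 X.
Proof.
  intros [g [H1 H2]] HX. apply (ex_RInt_ext g). 2: apply cont_ex_RInt, H1.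
  intros x Hx. rewrite Rmin_left in Hx by lra. symmetry; apply H2; lra.
Qed.

Lemma good_lin f g a b : good f -> good g -> good (fun x => a * f x + b * g x).
Proof.
  intros [f' [F1 F2]] [g' [G1 G2]]. exists (fun x => a * f' x + b * g' x). split.
  - intros; apply cont_lin; auto.
  - intros x Hx; rewrite F2, G2; auto.
Qed.

Lemma good_powmul f k : good f -> good (fun x => x ^ k * f x).
Proof.
  intros [f' [F1 F2]]. exists (fun x => x ^ k * f' x). split.
  - intros; apply cont_mul; auto. apply cont_pow.
  - intros x Hx; rewrite F2; auto.
Qed.

Lemma P_ext f g X : (forall y, 0 < y -> f y = g y) -> 0 < X -> P f X = P g X.
Proof.
  intros H HX. unfold P. f_equal. apply RInt_ext. intros x Hx.
  rewrite Rmin_left in Hx by lra. apply H; lra.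
Qed.

Lemma iter_ext f g : (forall y, 0 < y -> f y = g y) -> forall k X, 0 < X -> Nat.iter k P f X = Nat.iter k P g X.
Proof.
  intros H k. induction k as [|k IH]; intros X HX; simpl; auto.
  apply P_ext; auto.
Qed.

Lemma good_P f : good f -> good (P f).
Proof.
  intros [g [H1 H2]].
  set (h := fun y => if Req_EM_T y 0 then g 0 else / y * RInt g 0 y).
  exists h. split.
  - intros x. destruct (Req_EM_T x 0) as [->|Hne].
    + apply ed_cont. intros eps He.
      assert (HD := deriv_RInt_cont g H1 0). apply is_derive_Reals in HD.
      destruct (HD eps He) as [d Hd]. exists d. split; [apply cond_pos|].
      intros w Hw. rewrite Rminus_0_r in Hw. unfold h.
      destruct (Req_EM_T 0 0) as [_|]; [|lra].
      destruct (Req_EM_T w 0) as [->|Hw0].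
      * rewrite Rminus_diag, Rabs_R0; auto.
      * specialize (Hd w Hw0 Hw). rewrite Rplus_0_l, RInt_point in Hd.
        replace (/ w * RInt g 0 w) with ((RInt g 0 w - zero) / w) by (unfold zero; simpl; field; auto).
        exact Hd.
    + assert (Hc : continuous (fun y => / y * RInt g 0 y) x).
      { apply (ex_derive_continuous (K:=R_AbsRing) (V:=R_NormedModule)). auto_derive.
        repeat split; auto. apply cont_ex_RInt, H1. apply filter_forall; intros; apply cont_cpt, H1. }
      apply ed_cont. intros eps He. destruct (cpt_ed _ x Hc eps He) as [d [Hd Hw]].
      exists (Rmin d (Rabs x)). split.
      { apply Rmin_pos; auto. apply Rabs_pos_lt; auto. }
      intros w Hwx. assert (Hm1 := Rmin_l d (Rabs x)). assert (Hm2 := Rmin_r d (Rabs x)).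
      unfold h. destruct (Req_EM_T x 0); [lra|]. destruct (Req_EM_T w 0) as [->|Hw0].
      * rewrite Rminus_0_l, Rabs_Ropp in Hwx. lra.
      * apply Hw. lra.
  - intros x Hx. unfold h. destruct (Req_EM_T x 0); [lra|].
    unfold P. f_equal. apply RInt_ext. intros y Hy. rewrite Rmin_left in Hy by lra. apply H2; lra.
Qed.

Lemma good_iter f k : good f -> good (Nat.iter k P f).
Proof. intros H; induction k; simpl; auto. apply good_P; auto. Qed.

Lemma good_Pprod f k : good f -> good (Pprod k f).
Proof.
  intros H; induction k; simpl; auto.
  apply (good_ext (fun x => 1 * P (Pprod k f) x + (- / INR (S k)) * Pprod k f x)).
  - apply good_lin; auto. apply good_P; auto.
  - intros; simpl; ring.
Qed.

Lemma P_lin f g a b X : good f -> good g -> 0 < X ->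
  P (fun x => a * f x + b * g x) X = a * P f X + b * P g X.
Proof.
  intros Hf Hg HX. unfold P.
  rewrite (is_RInt_unique (fun x => a * f x + b * g x) 0 X (a * RInt f 0 X + b * RInt g 0 X)).
  - ring.
  - apply (is_RInt_plus (V:=R_CompleteNormedModule) (fun x => a * f x) (fun x => b * g x)).
    + apply (is_RInt_scal (V:=R_CompleteNormedModule) f). apply (RInt_correct (V:=R_CompleteNormedModule)).
      apply good_ex_RInt; auto; lra.
    + apply (is_RInt_scal (V:=R_CompleteNormedModule) g). apply (RInt_correct (V:=R_CompleteNormedModule)).
      apply good_ex_RInt; auto; lra.
Qed.

Lemma iter_lin f g a b : good f -> good g -> forall k X, 0 < X ->
  Nat.iter k P (fun x => a * f x + b * g x) X = a * Nat.iter k P f X + b * Nat.iter k P g X.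
Proof.
  intros Hf Hg k. induction k as [|k IH]; intros X HX; simpl; auto.
  rewrite (P_ext _ (fun x => a * Nat.iter k P f x + b * Nat.iter k P g x)); auto.
  apply P_lin; auto; apply good_iter; auto.
Qed.

Lemma iter_comm (f : R -> R) k : Nat.iter k P (P f) = P (Nat.iter k P f).
Proof. induction k; simpl; auto. rewrite IHk; auto. Qed.

Lemma iter_S' (f : R -> R) k : Nat.iter (S k) P f = Nat.iter k P (P f).
Proof. rewrite iter_comm. reflexivity. Qed.

Lemma P_scal f c X : good f -> 0 < X -> P (fun x => c * f x) X = c * P f X.
Proof.
  intros Hf HX. rewrite (P_ext _ (fun x => c * f x + 0 * f x)); [|intros; ring|auto].
  rewrite P_lin; auto. ring.
Qed.
Lemma cont_plus (f g : R -> R) x : continuous f x -> continuous g x ->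
  continuous (fun y => f y + g y) x.
Proof.
  intros Hf Hg. apply cpt_cont. apply cont_cpt in Hf. apply cont_cpt in Hg.
  apply (continuity_pt_plus f g x Hf Hg).
Qed.
Lemma cont_minus (f g : R -> R) x : continuous f x -> continuous g x ->
  continuous (fun y => f y - g y) x.
Proof.
  intros Hf Hg. apply cpt_cont. apply cont_cpt in Hf. apply cont_cpt in Hg.
  apply (continuity_pt_minus f g x Hf Hg).
Qed.
Lemma cont_shift (Q : R -> R) c x : (forall z, continuous Q z) -> continuous (fun y => Q (y - c)) x.
Proof.
  intros H. apply (continuous_comp (fun y => y - c) Q). 2: apply H.
  apply cont_minus. apply continuous_id. apply continuous_const.
Qed.
Lemma cont_c (c x : R) : continuous (fun _ : R => c) x.
Proof. apply continuous_const. Qed.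

Ltac cont := repeat (first [apply cont_minus | apply cont_plus | apply cont_mul | apply cont_pow | apply cont_c | apply continuous_id | apply cont_shift | solve [auto]]).

Lemma piece (Q1 Q2 Phi : R -> R) n c a b :
  (forall x, is_derive Q2 x (Q1 x)) -> (forall x, continuous Q1 x) -> (forall x, continuous Phi x) ->
  is_RInt (fun y => INR (S n) * y^n * Q2 (y - c) + y^(S n) * Q1 (y - c) - INR (S n) * (y^n * Phi y)) a b
   ((b^(S n) * Q2 (b - c) - INR (S n) * RInt (fun t => t^n * Phi t) 0 b)
   - (a^(S n) * Q2 (a - c) - INR (S n) * RInt (fun t => t^n * Phi t) 0 a)).
Proof.
  intros HD HC1 HP.
  assert (HC2 : forall x, continuous Q2 x).
  { intros x. apply (ex_derive_continuous (K:=R_AbsRing) (V:=R_NormedModule)). eexists; apply HD. }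
  apply (is_RInt_derive (V:=R_CompleteNormedModule) (fun y => y^(S n) * Q2 (y - c) - INR (S n) * RInt (fun t => t^n * Phi t) 0 y)).
  - intros x _. auto_derive.
    + repeat split.
      * eexists; apply HD.
      * apply (ex_RInt_continuous (V:=R_CompleteNormedModule)). intros; cont.
      * apply filter_forall. intros. apply cont_cpt. cont.
    + replace (Derive (fun x0 => Q2 x0) (x + - c)) with (Q1 (x + - c)) by (symmetry; apply is_derive_unique; apply HD).
      rewrite S_INR. unfold Rminus. destruct n; simpl; ring.
  - intros x _. cont.
Qed.

Lemma q_per m : q (S (S m)) 0 = q (S (S m)) 1.
Proof. rewrite q_SS. rewrite q_int0, RInt_point. unfold zero; simpl. ring. Qed.

Lemma phi_cont m x : continuous (fun y => q (S (S m)) (alpha y)) x.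
Proof. apply cont_alpha. apply q_cont. apply q_per. Qed.

Lemma alpha_nat k y : INR k <= y < INR k + 1 -> alpha y = y - INR k.
Proof. rewrite INR_IZR_INZ. apply alpha_eq. Qed.

Lemma shift_alpha m k y : INR k <= y <= INR k + 1 -> q (S (S m)) (alpha y) = q (S (S m)) (y - INR k).
Proof.
  intros [H1 H2]. destruct (Req_dec y (INR k + 1)) as [->|Hne].
  - rewrite (alpha_nat (S k)) by (rewrite S_INR; lra). rewrite S_INR.
    replace (INR k + 1 - (INR k + 1)) with 0 by ring. replace (INR k + 1 - INR k) with 1 by ring.
    apply q_per.
  - rewrite (alpha_nat k) by lra. reflexivity.
Qed.

Section IBP.
Variables m n : nat.
Let f x := x^(S n) * q (S m) (alpha x).
Let F x := x^(S n) * q (S (S m)) (alpha x) - INR (S n) * RInt (fun t => t^n * q (S (S m)) (alpha t)) 0 x.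

Lemma piece2 k a b : INR k <= a -> a <= b -> b <= INR k + 1 -> is_RInt f a b (F b - F a).
Proof.
  intros Ha Hab Hb.
  pose proof (piece (q (S m)) (q (S (S m))) (fun y => q (S (S m)) (alpha y)) n (INR k) a b
    (q_deriv m) (q_cont (S m)) (phi_cont m)) as H.
  unfold F. rewrite (shift_alpha m k a), (shift_alpha m k b) by lra.
  apply (is_RInt_ext _ f _ _ _ ) in H. exact H.
  intros y Hy. rewrite Rmin_left in Hy by lra. rewrite Rmax_right in Hy by lra.
  unfold f. rewrite (alpha_nat k y) by lra. lazymatch goal with |- ?a = ?b => change (a = b :> R) end; ring.
Qed.

Lemma chain N : forall X, 0 <= X <= INR N -> is_RInt f 0 X (F X - F 0).
Proof.
  induction N as [|N IH]; intros X [H1 H2].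
  - simpl in H2. replace X with 0 by lra. replace (F 0 - F 0) with (@zero R_NormedModule) by (unfold zero; simpl; ring).
    apply is_RInt_point.
  - rewrite S_INR in H2. destruct (Rle_lt_dec X (INR N)) as [HX|HX].
    + apply IH; lra.
    + assert (HN := pos_INR N).
      pose proof (is_RInt_Chasles f 0 (INR N) X _ _ (IH (INR N) (conj HN (Rle_refl _))) (piece2 N (INR N) X (Rle_refl _) (Rlt_le _ _ HX) H2)) as H.
      replace (F X - F 0) with (plus (F (INR N) - F 0) (F X - F (INR N))) by (unfold plus; simpl; ring).
      exact H.
Qed.

Lemma IBP X : 0 <= X -> is_RInt f 0 X (F X).
Proof.
  intros HX. destruct (archimed X) as [H1 H2].
  assert (Hu : (0 <= up X)%Z). { apply le_IZR. simpl. lra. }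
  replace (F X) with (F X - F 0).
  - apply (chain (Z.to_nat (up X))). rewrite INR_IZR_INZ, Znat.Z2Nat.id by auto. lra.
  - unfold F. rewrite RInt_point. unfold zero; simpl. ring.
Qed.
End IBP.

Lemma qcheck_cont j x : continuous (qcheck (S j)) x.
Proof. unfold qcheck. apply cont_mul. apply cont_c. apply phi_cont. Qed.

Lemma good_qcheck j : good (qcheck (S j)).
Proof. apply good_cont, qcheck_cont. Qed.

Lemma step1 k r Y : 0 < Y ->
  P (fun x => x ^ S k * qcheck r x) Y =
  / INR (S r) * (Y ^ k * qcheck (S r) Y) + (- INR (S k) / INR (S r)) * P (fun x => x ^ k * qcheck (S r) x) Y.
Proof.
  intros HY. unfold P.
  assert (E1 : RInt (fun x => x ^ S k * qcheck r x) 0 Y =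
     INR (Factorial.fact r) * (Y^(S k) * q (S (S r)) (alpha Y) - INR (S k) * RInt (fun t => t^k * q (S (S r)) (alpha t)) 0 Y)).
  { apply is_RInt_unique.
    apply (is_RInt_ext (fun x => scal (INR (Factorial.fact r)) (x ^ S k * q (S r) (alpha x)))).
    - intros x _. unfold qcheck, scal; simpl. unfold mult; simpl. ring.
    - apply (is_RInt_scal (V:=R_CompleteNormedModule)). apply (IBP r k Y). lra. }
  assert (E2 : RInt (fun x => x ^ k * qcheck (S r) x) 0 Y =
     INR (Factorial.fact (S r)) * RInt (fun t => t^k * q (S (S r)) (alpha t)) 0 Y).
  { apply is_RInt_unique.
    apply (is_RInt_ext (fun x => scal (INR (Factorial.fact (S r))) (x ^ k * q (S (S r)) (alpha x)))).
    - intros x _. unfold qcheck, scal; simpl. unfold mult; simpl. ring.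
    - apply (is_RInt_scal (V:=R_CompleteNormedModule)). apply (RInt_correct (V:=R_CompleteNormedModule)).
      apply cont_ex_RInt. intros; apply cont_mul. apply cont_pow. apply phi_cont. }
  rewrite E1, E2. unfold qcheck.
  replace (Factorial.fact (S r)) with (S r * Factorial.fact r)%nat by reflexivity.
  rewrite mult_INR. assert (0 < INR (S r)) by (apply lt_0_INR; lia).
  assert (INR (Factorial.fact r) <> 0) by apply INR_fact_neq_0.
  simpl pow. lazymatch goal with |- ?a = ?b => change (a = b :> R) end. field. split; lra.
Qed.

Lemma binom_step r k :
  (-1) ^ S k / Binomial.C (S r + k) (S k) = - INR (S k) / INR (S r) * ((-1) ^ k / Binomial.C (S r + k) k).
Proof.
  unfold Binomial.C.
  replace (S r + k - S k)%nat with r by lia. replace (S r + k - k)%nat with (S r) by lia.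
  replace (Factorial.fact (S r)) with (S r * Factorial.fact r)%nat by reflexivity.
  replace (Factorial.fact (S k)) with (S k * Factorial.fact k)%nat by reflexivity.
  rewrite !mult_INR.
  assert (0 < INR (S r)) by (apply lt_0_INR; lia).
  assert (0 < INR (S k)) by (apply lt_0_INR; lia).
  assert (INR (Factorial.fact r) <> 0) by apply INR_fact_neq_0.
  assert (INR (Factorial.fact k) <> 0) by apply INR_fact_neq_0.
  assert (INR (Factorial.fact (S r + k)) <> 0) by apply INR_fact_neq_0.
  simpl pow. field. repeat split; lra.
Qed.

Lemma main_gen n : forall r X, 0 < X ->
  Nat.iter n P (fun x => x ^ n * qcheck r x) X =
  (-1) ^ n / Binomial.C (r + n) n * Pprod n (qcheck (r + n)) X.
Proof.
  induction n as [|k IH]; intros r X HX.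
  - simpl. rewrite Nat.add_0_r. unfold Binomial.C. rewrite Nat.sub_0_r. simpl.
    assert (INR (Factorial.fact r) <> 0) by apply INR_fact_neq_0. field; auto.
  - rewrite iter_S'.
    set (a := fun x => x ^ k * qcheck (S r) x).
    assert (Ga : good a) by (apply good_powmul, good_qcheck).
    rewrite (iter_ext _ (fun Y => / INR (S r) * a Y + (- INR (S k) / INR (S r)) * P a Y)).
    2:{ intros Y HY. apply step1; auto. }
    2: auto.
    rewrite iter_lin; auto. 2: apply good_P; auto.
    rewrite iter_comm.
    replace (r + S k)%nat with (S r + k)%nat by lia.
    set (Pp := Pprod k (qcheck (S r + k))).
    assert (Gp : good Pp) by (apply good_Pprod, good_qcheck).
    rewrite (P_ext _ (fun Y => (-1) ^ k / Binomial.C (S r + k) k * Pp Y)); auto.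
    2:{ intros Y HY. apply IH; auto. }
    rewrite P_scal; auto. unfold a. rewrite (IH (S r) X HX). fold Pp.
    cbn [Pprod]. fold Pp. rewrite binom_step.
    assert (0 < INR (S r)) by (apply lt_0_INR; lia).
    assert (0 < INR (S k)) by (apply lt_0_INR; lia).
    assert (Binomial.C (S r + k) k <> 0).
    { unfold Binomial.C. apply Rmult_integral_contrapositive_currified; [apply INR_fact_neq_0|].
      apply Rinv_neq_0_compat, Rmult_integral_contrapositive_currified; apply INR_fact_neq_0. }
    field. repeat split; lra.
Qed.

Theorem mainTheorem6 (n r : nat) (X : R) :
  (1 <= n)%nat -> 0 < X ->
  Nat.iter n P (fun x => x ^ n * qcheck r x) X =
  (-1) ^ n / Binomial.C (r + n) n * Pprod n (qcheck (r + n)) X.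
Proof. intros _ HX. apply main_gen; auto. Qed.
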